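(* Let $F$ be a field of characteristic two and let $\mathfrak b$ be a bilinear $n$-fold Pfister form over $F$. If $\alpha\in Q(\mathfrak b)\setminus F^2$, then $\mathfrak i(\mathfrak b_{F(\sqrt\alpha)})=\mathfrak i(\mathfrak b)+1$.
   Context: A bilinear $n$-fold Pfister form is $\langle\!\langle\alpha_1,\dots,\alpha_n\rangle\!\rangle=\langle1,\alpha_1\rangle\otimes\cdots\otimes\langle1,\alpha_n\rangle$ with $\alpha_i\in F^\times$; $\langle\!\langle1\rangle\!\rangle^r$ denotes $\langle\!\langle1,\dots,1\rangle\!\rangle$ ($r$-fold), $\langle\!\langle1\rangle\!\rangle^0=\langle1\rangle$. Every bilinear Pfister form $\mathfrak b$ is isometric to $\langle\!\langle1\rangle\!\rangle^r\otimes\mathfrak b'$ for some integer $r\ge0$ and anisotropic bilinear Pfister form $\mathfrak b'$; this $r$ is denoted $\mathfrak i(\mathfrak b)$. $Q(\mathfrak b)=\{\mathfrak b(v,v)\mid v\ne0\}\cup\{0\}$. $\mathfrak b_K$ denotes scalar extension to $K$. *)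

(* Defs.v *)
From HB Require Import structures.
From mathcomp Require Import all_boot all_order all_algebra.
Set Implicit Arguments. Unset Strict Implicit. Unset Printing Implicit Defensive.
Import Order.TTheory GRing.Theory Num.Theory.
Local Open Scope ring_scope.

(* A diagonal symmetric bilinear form <d_0, ..., d_{m-1}> on F^m is
   represented by the sequence d of its diagonal coefficients. *)

Definition diagf (F : fieldType) (d : seq F) : 'M[F]_(size d) :=
  diag_mx (\row_(i < size d) d`_i).

Definition bval (F : fieldType) (d : seq F) (v : 'rV[F]_(size d)) : F :=
  (v *m diagf d *m v^T) 0 0.

(* Bilinear Pfister form <<a_1,...,a_k>> = <1,a_1> (x) ... (x) <1,a_k>,
   as its (2^k) diagonal entries; <<>> = <1>. *)
Fixpoint pfister (F : fieldType) (s : seq F) : seq F :=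
  match s with
  | [::] => [:: 1]
  | a :: s' => pfister s' ++ map (fun x => a * x) (pfister s')
  end.

Definition isometric (F : fieldType) (d1 d2 : seq F) : Prop :=
  size d1 = size d2 /\
  exists P : 'M[F]_(size d1, size d2),
    row_free P /\ row_full P /\ P^T *m diagf d1 *m P = diagf d2.

Definition anisotropic (F : fieldType) (d : seq F) : Prop :=
  forall v : 'rV[F]_(size d), v != 0 -> bval v != 0.

Definition inQ (F : fieldType) (d : seq F) (x : F) : Prop :=
  x = 0 \/ exists v : 'rV[F]_(size d), v != 0 /\ bval v = x.

(* pfister_index d r  <->  d is isometric to <<1>>^r (x) b' with b' an
   anisotropic bilinear Pfister form, i.e. "i(d) = r". *)
Definition pfister_index (F : fieldType) (d : seq F) (r : nat) : Prop :=
  exists beta : seq F, all (fun x => x != 0) beta /\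
    anisotropic (pfister beta) /\ isometric d (pfister (nseq r 1 ++ beta)).

(* Main.v *)
Require Import Defs.
From HB Require Import structures.
From mathcomp Require Import all_boot all_order all_algebra.
From mathcomp Require Import ring.
Import GRing.Theory.
Local Open Scope ring_scope.


Section IsoM.
Variable F : fieldType.

Definition isoM m n (A : 'M[F]_m) (B : 'M[F]_n) : Prop :=
  exists P : 'M[F]_(m, n), [/\ row_free P, row_full P & P^T *m A *m P = B].

Arguments isoM {m n}.

Lemma isoMP m n (A : 'M[F]_m) (B : 'M[F]_n) (P : 'M_(m,n)) (Q : 'M_(n,m)) :
  P *m Q = 1%:M -> Q *m P = 1%:M -> P^T *m A *m P = B -> isoM A B.
Proof.
move=> PQ QP E; exists P; split => //; [apply/row_freeP; exists Q|apply/row_fullP; exists Q] => //.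
Qed.
Arguments isoMP {m n A B} P Q.

Lemma isoM_refl m (A : 'M[F]_m) : isoM A A.
Proof. by apply: (isoMP 1%:M 1%:M); rewrite ?mulmx1 ?trmx1 ?mul1mx. Qed.

Lemma isoM_sym m n (A : 'M[F]_m) (B : 'M[F]_n) : isoM A B -> isoM B A.
Proof.
case=> P [/row_freeP[X PX] /row_fullP[Y YP] E].
have YX : Y = X by rewrite -[Y]mulmx1 -PX mulmxA YP mul1mx.
subst Y.
apply: (isoMP X P) => //.
by rewrite -E !mulmxA -!trmx_mul -!mulmxA PX trmx1 mul1mx mulmx1.
Qed.

Lemma isoM_trans m n p (A : 'M[F]_m) (B : 'M[F]_n) (C : 'M[F]_p) :
  isoM A B -> isoM B C -> isoM A C.
Proof.
case=> P [/row_freeP[X PX] /row_fullP[Y YP] E].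
case=> Q [/row_freeP[X' QX] /row_fullP[Y' YQ] E'].
have YX : Y = X by rewrite -[Y]mulmx1 -PX mulmxA YP mul1mx.
have YX' : Y' = X' by rewrite -[Y']mulmx1 -QX mulmxA YQ mul1mx.
subst Y Y'.
apply: (isoMP (P *m Q) (X' *m X)).
- by rewrite -mulmxA (mulmxA Q) QX mul1mx.
- by rewrite -mulmxA (mulmxA X) YP mul1mx.
- by rewrite -E' -E trmx_mul !mulmxA.
Qed.

Lemma isoM_castl m m' (e : m = m') n (A : 'M[F]_m) (B : 'M[F]_n) :
  isoM A B -> isoM (castmx (e, e) A) B.
Proof. by case: m' / e; rewrite castmx_id. Qed.

Lemma isoM_castr m n n' (e : n = n') (A : 'M[F]_m) (B : 'M[F]_n) :
  isoM A B -> isoM A (castmx (e, e) B).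
Proof. by case: n' / e; rewrite castmx_id. Qed.

Lemma isoM_block m1 m2 n1 n2 (A : 'M[F]_m1) (A' : 'M[F]_n1) (B : 'M[F]_m2) (B' : 'M[F]_n2) :
  isoM A A' -> isoM B B' -> isoM (block_mx A 0 0 B) (block_mx A' 0 0 B').
Proof.
case=> P [/row_freeP[X PX] /row_fullP[Y YP] E].
case=> Q [/row_freeP[X' QX] /row_fullP[Y' YQ] E'].
have YX : Y = X by rewrite -[Y]mulmx1 -PX mulmxA YP mul1mx.
have YX' : Y' = X' by rewrite -[Y']mulmx1 -QX mulmxA YQ mul1mx.
subst Y Y'.
apply: (isoMP (block_mx P 0 0 Q) (block_mx X 0 0 X')).
- by rewrite mulmx_block !mulmx0 !mul0mx !addr0 !add0r PX QX -scalar_mx_block.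
- by rewrite mulmx_block !mulmx0 !mul0mx !addr0 !add0r YP YQ -scalar_mx_block.
- by rewrite tr_block_mx !trmx0 !mulmx_block !mulmx0 !mul0mx !addr0 !add0r !mul0mx E E'.
Qed.

Lemma isoM_scale m n (A : 'M[F]_m) (B : 'M[F]_n) c : isoM A B -> isoM (c *: A) (c *: B).
Proof.
case=> P [h1 h2 E]; exists P; split => //.
by rewrite -E -scalemxAr -scalemxAl.
Qed.

Lemma isoM_sq n (A : 'M[F]_n) x : x != 0 -> isoM ((x ^+ 2) *: A) A.
Proof.
move=> x0; apply: (isoMP ((x^-1)%:M) (x%:M)).
- by rewrite -scalar_mxM mulVf.
- by rewrite -scalar_mxM mulfV.
- rewrite tr_scalar_mx mul_scalar_mx mul_mx_scalar !scalerA.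
  by rewrite expr2 mulrA mulrAC mulVf // mul1r mulVf // scale1r.
Qed.

Lemma isoM_swap m n (A : 'M[F]_m) (B : 'M[F]_n) :
  isoM (block_mx A 0 0 B) (block_mx B 0 0 A).
Proof.
pose P : 'M[F]_(m + n, n + m) := block_mx 0 1%:M 1%:M 0.
apply: (isoMP (P) (P^T)); rewrite /P ?tr_block_mx ?trmx0 ?trmx1 !mulmx_block
  ?mulmx0 ?mul0mx ?mulmx1 ?mul1mx ?addr0 ?add0r ?mulmx_block ?mulmx0 ?mul0mx ?mulmx1 ?mul1mx ?addr0 ?add0r -?scalar_mx_block //.
Qed.

End IsoM.
Arguments isoM {F m n}.
Arguments isoMP {F m n A B} P Q.
Section K.
Variable F : fieldType.
Lemma isoM_kron n (D : 'M[F]_n) p q p' q' x11 x12 x21 x22 :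
 x11 * x22 - x12 * x21 != 0 ->
 p * x11 ^+ 2 + q * x21 ^+ 2 = p' ->
 p * x11 * x12 + q * x21 * x22 = 0 ->
 p * x12 ^+ 2 + q * x22 ^+ 2 = q' ->
 isoM (block_mx (p *: D) 0 0 (q *: D)) (block_mx (p' *: D) 0 0 (q' *: D)).
Proof.
move=> det0 E1 E2 E3.
apply: (isoMP (block_mx x11%:M x12%:M x21%:M x22%:M)
   ((x11 * x22 - x12 * x21)^-1 *: block_mx x22%:M (- x12)%:M (- x21)%:M x11%:M)).
- rewrite -scalemxAr mulmx_block -!scalar_mxM -!raddfD /=.
  have -> : x11 * x22 + x12 * - x21 = x11 * x22 - x12 * x21 by ring.
  have -> : x21 * - x12 + x22 * x11 = x11 * x22 - x12 * x21 by ring.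
  have -> : x11 * - x12 + x12 * x11 = 0 by ring.
  have -> : x21 * x22 + x22 * - x21 = 0 by ring.
  by rewrite raddf0 -scalar_mx_block scale_scalar_mx mulVf.
- rewrite -scalemxAl mulmx_block -!scalar_mxM -!raddfD /=.
  have -> : x22 * x11 + - x12 * x21 = x11 * x22 - x12 * x21 by ring.
  have -> : - x21 * x12 + x11 * x22 = x11 * x22 - x12 * x21 by ring.
  have -> : x22 * x12 + - x12 * x22 = 0 by ring.
  have -> : - x21 * x11 + x11 * x21 = 0 by ring.
  by rewrite raddf0 -scalar_mx_block scale_scalar_mx mulVf.
- rewrite tr_block_mx !tr_scalar_mx !mulmx_block ?mulmx0 ?mul0mx ?addr0 ?add0r !mul_scalar_mx !mul_mx_scalar ?scalerA.
  rewrite -!scalerDl.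
  have -> : x11 * x11 * p + x21 * x21 * q = p' by rewrite -E1; ring.
  have -> : x12 * x12 * p + x22 * x22 * q = q' by rewrite -E3; ring.
  have -> : x12 * x11 * p + x22 * x21 * q = 0 by rewrite -E2; ring.
  have -> : x11 * x12 * p + x21 * x22 * q = 0 by rewrite -E2; ring.
  by rewrite !scale0r.
Qed.
End K.

Set Implicit Arguments. Unset Strict Implicit.

Section Seq.
Variable F : fieldType.
Implicit Types d : seq F.

Definition iso d1 d2 := isoM (diagf d1) (diagf d2).

Lemma iso_isometric d1 d2 : iso d1 d2 -> isometric d1 d2.
Proof.
case=> P [fr fu E]; split; last by exists P.
by move: fr fu; rewrite /row_free /row_full => /eqP h1 /eqP h2; exact: (etrans (esym h1) h2).
Qed.

Lemma isometric_iso d1 d2 : isometric d1 d2 -> iso d1 d2.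
Proof. by case=> _ [P [? [? ?]]]; exists P. Qed.

Lemma iso_refl d : iso d d. Proof. exact: isoM_refl. Qed.
Lemma iso_sym d1 d2 : iso d1 d2 -> iso d2 d1. Proof. exact: isoM_sym. Qed.
Lemma iso_trans d1 d2 d3 : iso d1 d2 -> iso d2 d3 -> iso d1 d3.
Proof. exact: isoM_trans. Qed.

Lemma diag_mx_cast n n' (e : n = n') (r : 'rV[F]_n) :
  diag_mx (castmx (erefl 1%N, e) r) = castmx (e, e) (diag_mx r).
Proof. by case: n' / e; rewrite !castmx_id. Qed.

Lemma diagf_cat d1 d2 : diagf (d1 ++ d2) =
  castmx (esym (size_cat d1 d2), esym (size_cat d1 d2))
    (block_mx (diagf d1) 0 0 (diagf d2)).
Proof.
rewrite /diagf -diag_mx_row -diag_mx_cast; congr diag_mx.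
apply/rowP => i; rewrite castmxE !mxE /=.
case: splitP => k /= hk; rewrite !mxE nth_cat hk.
  by rewrite ltn_ord.
by rewrite ltnNge leq_addr /= addKn.
Qed.

Lemma diagf_scale c d : diagf (map (fun x => c * x) d) =
  castmx (esym (size_map _ d), esym (size_map _ d)) (c *: diagf d).
Proof.
apply/matrixP => i j; rewrite castmxE !mxE /=.
rewrite (inj_eq (@cast_ord_inj _ _ _)); case: eqP => _; last by rewrite mulr0n mulr0.
by rewrite (nth_map 0) ?mulr1n // -(size_map (fun x => c * x) d).
Qed.

Lemma block_cast m1 m1' m2 m2' (e1 : m1 = m1') (e2 : m2 = m2') (A : 'M[F]_m1) (B : 'M[F]_m2) :
  block_mx (castmx (e1, e1) A) 0 0 (castmx (e2, e2) B) =
  castmx (f_equal2 addn e1 e2, f_equal2 addn e1 e2) (block_mx A 0 0 B).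
Proof. by case: m1' / e1; case: m2' / e2; rewrite !castmx_id. Qed.

Lemma iso_cat d1 d2 e1 e2 : iso d1 e1 -> iso d2 e2 -> iso (d1 ++ d2) (e1 ++ e2).
Proof.
move=> h1 h2; rewrite /iso !diagf_cat.
by apply: isoM_castl; apply: isoM_castr; apply: isoM_block.
Qed.

Lemma iso_scale c d1 d2 : iso d1 d2 ->
  iso (map (fun x => c * x) d1) (map (fun x => c * x) d2).
Proof.
move=> h; rewrite /iso !diagf_scale.
by apply: isoM_castl; apply: isoM_castr; apply: isoM_scale.
Qed.

Lemma iso_sq x d : x != 0 -> iso (map (fun y => x ^+ 2 * y) d) d.
Proof.
move=> x0; rewrite /iso diagf_scale.
by apply: isoM_castl; apply: isoM_sq.
Qed.

Lemma iso_swap d1 d2 : iso (d1 ++ d2) (d2 ++ d1).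
Proof.
rewrite /iso !diagf_cat.
by apply: isoM_castl; apply: isoM_castr; apply: isoM_swap.
Qed.

Definition tens d p q := map (fun x => p * x) d ++ map (fun x => q * x) d.

Lemma iso_kron d p q p' q' x11 x12 x21 x22 :
 x11 * x22 - x12 * x21 != 0 ->
 p * x11 ^+ 2 + q * x21 ^+ 2 = p' ->
 p * x11 * x12 + q * x21 * x22 = 0 ->
 p * x12 ^+ 2 + q * x22 ^+ 2 = q' ->
 iso (tens d p q) (tens d p' q').
Proof.
move=> h0 h1 h2 h3; rewrite /iso /tens !diagf_cat !diagf_scale.
apply: isoM_castl; apply: isoM_castr; rewrite !block_cast.
apply: isoM_castl; apply: isoM_castr; exact: (isoM_kron _ _ _ _ _ _ _ _ _ _ _ h0 h1 h2 h3).
Qed.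

End Seq.


Section Map.
Variables (F K : fieldType) (iota : {rmorphism F -> K}).

Lemma isoM_map m n (A : 'M[F]_m) (B : 'M[F]_n) :
  isoM A B -> isoM (map_mx iota A) (map_mx iota B).
Proof.
case=> P [/row_freeP[X PX] /row_fullP[Y YP] E].
apply: (isoMP (map_mx iota P) (map_mx iota X)).
- by rewrite -map_mxM PX map_mx1.
- have YX : Y = X by rewrite -[Y]mulmx1 -PX mulmxA YP mul1mx.
  by rewrite -map_mxM -YX YP map_mx1.
- by rewrite map_trmx -!map_mxM E.
Qed.

Lemma diagf_map d : diagf (map iota d) =
  castmx (esym (size_map iota d), esym (size_map iota d)) (map_mx iota (diagf d)).
Proof.
apply/matrixP => i j; rewrite castmxE !mxE /=.
rewrite (inj_eq (@cast_ord_inj _ _ _)); case: eqP => _; last by rewrite mulr0n rmorph0.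
by rewrite (nth_map 0) ?mulr1n // -(size_map iota d).
Qed.

Lemma iso_map d1 d2 : iso d1 d2 -> iso (map iota d1) (map iota d2).
Proof.
move=> h; rewrite /iso !diagf_map.
by apply: isoM_castl; apply: isoM_castr; apply: isoM_map.
Qed.

End Map.

Section Val.
Variable F : fieldType.
Implicit Types d : seq F.

Definition fval d (f : nat -> F) := \sum_(0 <= i < size d) d`_i * f i ^+ 2.
Definition zero_on n (f : nat -> F) := forall i, (i < n)%N -> f i = 0.
Definition aniso d := forall f, fval d f = 0 -> zero_on (size d) f.

Definition rowf n (v : 'rV[F]_n) : nat -> F :=
  fun i => if insub i is Some k then v 0 k else 0.

Lemma rowfE n (v : 'rV[F]_n) (k : 'I_n) : rowf v k = v 0 k.
Proof. by rewrite /rowf valK. Qed.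

Lemma rowf_row n (f : nat -> F) i : (i < n)%N -> rowf (\row_(k < n) f k) i = f i.
Proof. by move=> h; rewrite /rowf insubT /= mxE. Qed.

Lemma fval_ext d f g : (forall i, (i < size d)%N -> f i = g i) -> fval d f = fval d g.
Proof. by move=> h; apply: eq_big_nat => i /andP[_ hi]; rewrite h. Qed.

Lemma bval_fval d (v : 'rV_(size d)) : bval v = fval d (rowf v).
Proof.
rewrite /bval /fval big_mkord /diagf mul_mx_diag mxE; apply: eq_bigr => i _.
by rewrite !mxE rowfE; ring.
Qed.

Lemma fval_bval d f : fval d f = bval (\row_(k < size d) f k).
Proof. by rewrite bval_fval; apply: fval_ext => i h; rewrite rowf_row. Qed.

Lemma iso_val d1 d2 : iso d1 d2 -> forall f, exists g,
  fval d2 f = fval d1 g /\ (zero_on (size d1) g -> zero_on (size d2) f).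
Proof.
case=> P [_ /row_fullP[Y YP] E] f.
pose v := \row_(k < size d2) f k; pose w := v *m P^T.
exists (rowf w); split.
  rewrite fval_bval -bval_fval /bval -E /w !mulmxA trmx_mul trmxK.
  by rewrite !mulmxA.
move=> z i hi.
have w0 : w = 0 by apply/rowP => k; rewrite [RHS]mxE -rowfE z.
have : v = 0 by rewrite -[v]mulmx1 -trmx1 -YP trmx_mul mulmxA -/w w0 mul0mx.
move/rowP/(_ (Ordinal hi)); rewrite !mxE //.
Qed.

Lemma fval_cat d1 d2 f :
  fval (d1 ++ d2) f = fval d1 f + fval d2 (fun i => f (size d1 + i)%N).
Proof.
rewrite /fval size_cat.
rewrite (@big_cat_nat _ _ _ (size d1)) ?leq_addr //=; congr (_ + _).
  by apply: eq_big_nat => i /andP[_ h]; rewrite nth_cat h.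
rewrite -{1}[size d1]add0n big_addn addKn; apply: eq_bigr => i _.
by rewrite nth_cat ltnNge leq_addl /= addnK addnC.
Qed.

Lemma fval_scale c d f : fval (map (fun x => c * x) d) f = c * fval d f.
Proof.
rewrite /fval mulr_sumr size_map.
by apply: eq_big_nat => i /andP[_ h]; rewrite (nth_map 0) // mulrA.
Qed.

Lemma fval_unit d i : (i < size d)%N -> fval d (fun j => (j == i)%:R) = d`_i.
Proof.
move=> h; rewrite /fval big_mkord (bigD1 (Ordinal h)) //= eqxx expr1n mulr1 big1 ?addr0 //.
move=> j /eqP hj; case: eqP => e; last by rewrite expr0n mulr0.
by case: hj; apply: val_inj.
Qed.

Lemma fval0 d f : zero_on (size d) f -> fval d f = 0.
Proof. by move=> z; rewrite /fval big_mkord big1 // => i _; rewrite z // expr0n mulr0. Qed.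

Lemma zero_on_ext n f g : (forall i, (i < n)%N -> f i = g i) -> zero_on n f -> zero_on n g.
Proof. by move=> h z i hi; rewrite -h ?z. Qed.

Hypothesis ch2 : 2%N \in [pchar F].

Lemma sqrD2 (x y : F) : (x + y) ^+ 2 = x ^+ 2 + y ^+ 2.
Proof. by rewrite sqrrD mulr2n addrr_pchar2 // addr0. Qed.

Lemma fval_add d f g : fval d f + fval d g = fval d (fun i => f i + g i).
Proof.
rewrite /fval -big_split /=; apply: eq_bigr => i _.
by rewrite sqrD2 mulrDr.
Qed.

End Val.

Lemma fval_map (F K : fieldType) (iota : {rmorphism F -> K}) d f :
  fval (map iota d) (fun i => iota (f i)) = iota (fval d f).
Proof.
rewrite /fval rmorph_sum size_map.
by apply: eq_big_nat => i /andP[_ h]; rewrite (nth_map 0) // rmorphM rmorphXn.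
Qed.


Section Round.
Variable F : fieldType.
Implicit Types d : seq F.

Definition sc (k : F) d := map (fun y => k * y) d.

Lemma sc_comp k v d : sc k (sc v d) = sc (k * v) d.
Proof. by rewrite /sc -map_comp; apply: eq_map => y /=; rewrite mulrA. Qed.

Lemma sc1 d : sc 1 d = d.
Proof. by rewrite /sc (eq_map (@mul1r _)) map_id. Qed.

Lemma sc_cat k d1 d2 : sc k (d1 ++ d2) = sc k d1 ++ sc k d2.
Proof. exact: map_cat. Qed.

Lemma sc_eq k k' d : k = k' -> sc k d = sc k' d.
Proof. by move->. Qed.

Lemma pfister_cons (x : F) s : pfister (x :: s) = pfister s ++ sc x (pfister s).
Proof. by []. Qed.

Lemma fval_pf_cons (x : F) s f : fval (pfister (x :: s)) f =
  fval (pfister s) f + x * fval (pfister s) (fun i => f (size (pfister s) + i)%N).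
Proof. by rewrite pfister_cons fval_cat fval_scale. Qed.

Lemma iso_sc k d1 d2 : iso d1 d2 -> iso (sc k d1) (sc k d2).
Proof. exact: iso_scale. Qed.

Lemma round (s : seq F) f : fval (pfister s) f != 0 ->
  iso (sc (fval (pfister s) f) (pfister s)) (pfister s).
Proof.
elim: s f => [|x s IH] f.
  rewrite /fval /= big_nat1 /= mul1r => h.
  have f0 : f 0%N != 0 by apply: contraNneq h => ->; rewrite expr0n.
  by have := iso_sq [:: 1] f0.
set c' := pfister s.
rewrite fval_pf_cons -/c'.
set u := fval c' f; set w := fval c' _ => hc.
rewrite pfister_cons sc_cat sc_comp -/c'.
have [w0|w0] := eqVneq w 0.
  move: hc; rewrite w0 mulr0 addr0 => hu.
  apply: iso_cat; first exact: IH.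
  rewrite (@sc_eq _ (x * u)); last by ring.
  by rewrite -sc_comp; apply: iso_sc; apply: IH.
have IHw := IH _ w0.
have [u0|u0] := eqVneq u 0.
  move: hc; rewrite u0 add0r => hc.
  have x0 : x != 0 by apply: contraNneq hc => ->; rewrite mul0r.
  apply: iso_trans (iso_swap _ _).
  apply: iso_cat.
    by rewrite -sc_comp; apply: iso_sc.
  rewrite (@sc_eq _ (x ^+ 2 * w)); last by ring.
  rewrite -sc_comp; apply: iso_trans (iso_sq _ x0).
  exact: iso_sc.
have IHu := IH _ u0.
apply: iso_sym.
have h1 : iso (c' ++ sc x c') (tens c' u (x * w)).
  apply: iso_cat; first exact: iso_sym.
    by change (iso (sc x c') (sc (x * w) c')); rewrite -sc_comp; apply: iso_sc; apply: iso_sym.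
apply: iso_trans h1 _.
have h2 : iso (tens c' u (x * w)) (tens c' (u + x * w) (u * (x * w) * (u + x * w))).
  apply: (@iso_kron _ _ _ _ _ _ 1 (x * w) 1 (- u)).
  - by rewrite mul1r mulr1 -opprD oppr_eq0.
  - by ring.
  - by ring.
  - by ring.
apply: iso_trans h2 _.
rewrite /tens; apply: iso_cat; first exact: iso_refl.
change (iso (sc (u * (x * w) * (u + x * w)) c') (sc ((u + x * w) * x) c')).
have -> : sc (u * (x * w) * (u + x * w)) c' = sc ((u + x * w) * x) (sc u (sc w c')).
  by rewrite !sc_comp; apply: sc_eq; ring.
apply: iso_sc; apply: iso_trans IHu; exact: iso_sc.
Qed.

End Round.


Section Gen.
Variable F : fieldType.
Implicit Types d : seq F.

Lemma size_pfister (s : seq F) : size (pfister s) = (2 ^ size s)%N.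
Proof.
elim: s => [|x s IH] //=; rewrite size_cat size_map IH expnS mul2n addnn //.
Qed.

Lemma pfister_head (s : seq F) : (pfister s)`_0 = 1.
Proof.
elim: s => [|x s IH] //=; rewrite nth_cat size_pfister expn_gt0 /= IH //.
Qed.

Definition comb n (g1 g2 : nat -> F) i := if (i < n)%N then g1 i else g2 (i - n)%N.

Lemma fval_pf_comb (y : F) s g1 g2 :
  fval (pfister (y :: s)) (comb (size (pfister s)) g1 g2) =
  fval (pfister s) g1 + y * fval (pfister s) g2.
Proof.
rewrite fval_pf_cons; congr (_ + _ * _); apply: fval_ext => i hi; rewrite /comb.
  by rewrite hi.
by rewrite ltnNge leq_addr /= addKn.
Qed.

Lemma zero_on_cat n m (z : nat -> F) :
  zero_on n z -> zero_on m (fun i => z (n + i)%N) -> zero_on (n + m) z.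
Proof.
move=> h1 h2 i hi; case: (ltnP i n) => h; first exact: h1.
by rewrite -(subnKC h); apply: h2; rewrite -(ltn_add2l n) subnKC.
Qed.

Lemma aniso_pf_cons (y : F) s g1 g2 : aniso (pfister (y :: s)) ->
  fval (pfister s) g1 + y * fval (pfister s) g2 = 0 ->
  zero_on (size (pfister s)) g1 /\ zero_on (size (pfister s)) g2.
Proof.
move=> an; rewrite -fval_pf_comb => /an.
rewrite pfister_cons size_cat /sc size_map => z; split => i hi.
  by have := z i; rewrite /comb hi; apply; rewrite ltn_addr.
have e : (size (pfister s) + i < size (pfister s))%N = false by rewrite ltnNge leq_addr.
have := z (size (pfister s) + i)%N; rewrite /comb e addKn.
by apply; rewrite ltn_add2l.
Qed.

Lemma aniso_sub (y : F) s : aniso (pfister (y :: s)) -> aniso (pfister s).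
Proof.
move=> an g hg; have := @aniso_pf_cons y s g (fun _ => 0) an.
by rewrite hg fval0 ?mulr0 ?addr0 // => /(_ erefl) [].
Qed.

Lemma fval_unit_t d i t : (i < size d)%N ->
  fval d (fun j => (j == i)%:R * t) = d`_i * t ^+ 2.
Proof.
move=> h; rewrite -fval_unit // /fval mulr_suml; apply: eq_bigr => j _.
by rewrite exprMn mulrA.
Qed.

End Gen.

Lemma map_sc (F K : fieldType) (iota : {rmorphism F -> K}) k d :
  map iota (sc k d) = sc (iota k) (map iota d).
Proof. by rewrite /sc -!map_comp; apply: eq_map => y /=; rewrite rmorphM. Qed.

Lemma map_pfister (F K : fieldType) (iota : {rmorphism F -> K}) (s : seq F) :
  map iota (pfister s) = pfister (map iota s).
Proof.
elim: s => [|x s IH] /=; first by rewrite rmorph1.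
by rewrite map_cat -/(sc x _) map_sc IH.
Qed.


Section StepC.
Variables (F K : fieldType) (iota : {rmorphism F -> K}).
Hypothesis ch2 : 2%N \in [pchar F].
Variables (alpha : F) (t : K).
Hypothesis nsq : ~ (exists x : F, x ^+ 2 = alpha).
Hypothesis ht : t ^+ 2 = iota alpha.
Hypothesis hK : forall x : K, exists u v : F, x = iota u + iota v * t.

Let chK : 2%N \in [pchar K] := rmorph_pchar iota ch2.

Let exP (x : K) : exists uv : F * F, x == iota uv.1 + iota uv.2 * t.
Proof. by have [u [v e]] := hK x; exists (u, v); rewrite e. Qed.

Definition dec (x : K) : F * F := xchoose (exP x).

Lemma decE x : x = iota (dec x).1 + iota (dec x).2 * t.
Proof. exact/eqP/(xchooseP (exP x)). Qed.

Lemma fval_dec d (z : nat -> K) : fval (map iota d) z =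
  iota (fval d (fun i => (dec (z i)).1) + alpha * fval d (fun i => (dec (z i)).2)).
Proof.
rewrite /fval size_map rmorphD rmorphM !rmorph_sum mulr_sumr -big_split.
apply: eq_big_nat => i /andP[_ hi]; rewrite (nth_map 0) // {1}(decE (z i)).
rewrite (sqrD2 chK) exprMn ht !rmorphM /=; ring.
Qed.

Lemma stepC (b : seq F) f : all (fun x => x != 0) b -> aniso (pfister b) ->
  fval (pfister b) f = alpha ->
  exists g : seq K, [/\ all (fun x => x != 0) g, aniso (pfister g),
    iso (pfister (map iota b)) (pfister (1 :: g)) &
    forall z, exists r, fval (pfister g) z = iota (fval (pfister b) r)].
Proof.
elim: b f => [|y b IH] f.
  move=> _ _; rewrite /fval /= big_nat1 /= mul1r => h; case: nsq; by exists (f 0%N).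
move=> /= /andP[y0 nz] an.
set c' := pfister b.
rewrite fval_pf_cons -/c'.
set u := fval c' f; set f2 := (fun i => f (size c' + i)%N); set w := fval c' f2 => ha.
have anc : aniso c' := aniso_sub an.
have [w0|w0] := eqVneq w 0.
- move: ha; rewrite w0 mulr0 addr0 => ha.
  have [g [gnz gan giso gval]] := IH f nz anc ha.
  exists (iota y :: g); split.
  + by rewrite /= fmorph_eq0 y0.
  + move=> z; rewrite fval_pf_cons => hz.
    have [r1 e1] := gval z.
    have [r2 e2] := gval (fun i => z (size (pfister g) + i)%N).
    move: hz; rewrite e1 e2 -rmorphM -rmorphD => /eqP; rewrite fmorph_eq0 => /eqP.
    move=> /(aniso_pf_cons an) [z1 z2].
    have h1 : fval (pfister g) z = 0 by rewrite e1 fval0 ?rmorph0.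
    have h2 : fval (pfister g) (fun i => z (size (pfister g) + i)%N) = 0.
      by rewrite e2 fval0 ?rmorph0.
    rewrite pfister_cons size_cat /sc size_map.
    by apply: zero_on_cat; apply: gan.
  + change (iso (pfister (map iota b) ++ sc (iota y) (pfister (map iota b))) (pfister (iota y :: g) ++ sc 1 (pfister (iota y :: g)))).
    rewrite sc1 pfister_cons.
    move: giso; rewrite !pfister_cons sc1 => giso.
    apply: iso_trans (iso_cat giso (iso_sc (iota y) giso)) _.
    rewrite sc_cat -!catA; apply: iso_cat; first exact: iso_refl.
    rewrite !catA; apply: iso_cat; first exact: iso_swap.
    exact: iso_refl.
  + move=> z; rewrite fval_pf_cons.
    have [r1 e1] := gval z.
    have [r2 e2] := gval (fun i => z (size (pfister g) + i)%N).
    exists (comb (size c') r1 r2).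
    by rewrite -[c' ++ _]/(pfister (y :: b)) fval_pf_comb e1 e2 rmorphD rmorphM.
have roundw : iso (sc w c') c' by apply: round.
have key : forall z, exists r, fval (pfister (map iota b)) z = iota (fval (pfister (y :: b)) r) /\
    (zero_on (size (pfister (y :: b))) r -> zero_on (size (pfister (map iota b))) z).
  move=> z.
  pose p := fun i => (dec (z i)).1; pose q := fun i => (dec (z i)).2.
  have [q2 [e2 z2]] := iso_val (iso_sym roundw) q.
  have [q1 e1] : exists q1, u * fval c' q = fval c' q1.
    have [u0|u0] := eqVneq u 0.
      by exists (fun _ => 0); rewrite u0 mul0r fval0.
    have [q1 [e1 _]] := iso_val (iso_sym (round u0)) q.
    by exists q1; rewrite -e1 fval_scale.
  have hv : fval (pfister b) p + alpha * fval (pfister b) q =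
      fval (pfister (y :: b)) (comb (size c') (fun i => p i + q1 i) q2).
    rewrite fval_pf_comb -/c' -(fval_add ch2) -e1 -e2 fval_scale -ha; ring.
  exists (comb (size c') (fun i => p i + q1 i) q2); split.
    by rewrite -hv -map_pfister fval_dec.
  move=> zr.
  have zq2 : zero_on (size c') q2.
    move=> i hi; have := zr (size c' + i)%N.
    have e : (size c' + i < size c')%N = false by rewrite ltnNge leq_addr.
    rewrite /comb e addKn; apply.
    by rewrite pfister_cons size_cat /sc size_map ltn_add2l.
  have zq : zero_on (size c') q.
    by have := z2 zq2; rewrite /sc size_map.
  have fp : fval c' p = 0.
    have := fval0 zr; rewrite -hv (fval0 zq) mulr0 addr0 //.
  have zp := anc _ fp.
  move=> i; rewrite -map_pfister size_map -/c' => hi.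
  by rewrite (decE (z i)) -/(p i) -/(q i) zp // zq // rmorph0 mul0r addr0.
exists (map iota b); split.
- by rewrite all_map; apply: sub_all nz => x /=; rewrite fmorph_eq0.
- move=> z hz; have [r [e zr]] := key z; apply: zr; apply: an.
  by apply/eqP; rewrite -(fmorph_eq0 iota) -e hz.
- change (iso (pfister (map iota b) ++ sc (iota y) (pfister (map iota b)))
    (pfister (map iota b) ++ sc 1 (pfister (map iota b)))).
  rewrite sc1; apply: iso_cat; first exact: iso_refl.
  set cK := pfister (map iota b).
  have rw : iso (sc (iota w) cK) cK.
    by have := iso_map iota roundw; rewrite map_sc /cK map_pfister.
  pose zz := fun i => iota (f i) + (i == 0%N)%:R * t.
  have ez : fval cK zz = iota (y * w).
    rewrite /zz -(fval_add chK) /cK -map_pfister fval_map fval_unit_t.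
      rewrite (nth_map 0) ?pfister_head ?rmorph1 ?mul1r ?ht -?ha.
        by rewrite -rmorphD addrA addrr_pchar2 // add0r.
      by rewrite size_pfister expn_gt0.
    by rewrite size_map size_pfister expn_gt0.
  have e0 : fval cK zz != 0 by rewrite ez fmorph_eq0 mulf_neq0.
  apply: iso_trans (round e0).
  rewrite ez rmorphM -sc_comp; apply: iso_sc; exact: iso_sym rw.
- by move=> z; have [r [e _]] := key z; exists r.
Qed.

End StepC.


Section Uniq.
Variable E : fieldType.
Implicit Types d : seq E.

Definition isval d x := exists f, fval d f = x.

Lemma anisotropic_aniso d : anisotropic d -> aniso d.
Proof.
move=> an f hf i hi.
have : \row_(k < size d) f k = 0.
  apply/eqP; apply: contraT => /an; rewrite -fval_bval hf eqxx //.
by move/rowP/(_ (Ordinal hi)); rewrite !mxE.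
Qed.

Lemma aniso_anisotropic d : aniso d -> anisotropic d.
Proof.
move=> an v v0; apply/negP => /eqP h; move: v0; rewrite bval_fval in h.
have z := an _ h; suff -> : v = 0 by rewrite eqxx.
by apply/rowP => k; rewrite [RHS]mxE -rowfE z.
Qed.

Lemma isval_iso d1 d2 x : iso d1 d2 -> isval d1 x -> isval d2 x.
Proof.
move=> h [f <-]; have [g [e _]] := iso_val (iso_sym h) f.
by exists g; rewrite e.
Qed.

Lemma iso_ones r (X Y : seq E) : iso (pfister X) (pfister Y) ->
  iso (pfister (nseq r 1 ++ X)) (pfister (nseq r 1 ++ Y)).
Proof.
move=> h; elim: r => [|r IH] //=.
exact: iso_cat IH (iso_sc 1 IH).
Qed.

Lemma nseqS_cat r (x : E) s : nseq r.+1 x ++ s = nseq r x ++ x :: s.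
Proof. by elim: r => [|r IH] //=; rewrite -IH. Qed.

Hypothesis ch2 : 2%N \in [pchar E].

Lemma pf_ones_val r (b : seq E) x :
  isval (pfister (nseq r 1 ++ b)) x <-> isval (pfister b) x.
Proof.
elim: r => [|r IH] //=; rewrite -IH; split.
  move=> [f]; rewrite -/(pfister (_ :: _)) fval_pf_cons mul1r (fval_add ch2) => e.
  by eexists; exact: e.
move=> [f e]; exists (comb (size (pfister (nseq r 1 ++ b))) f (fun _ => 0)).
by rewrite -[_ ++ _]/(pfister (1 :: (nseq r 1 ++ b))) fval_pf_comb (@fval0 _ _ (fun _ => 0)) // mulr0 addr0 e.
Qed.

Lemma frob2 (I : finType) (g : I -> E) : (\sum_i g i) ^+ 2 = \sum_i g i ^+ 2.
Proof. by rewrite -!(pFrobenius_autE ch2) rmorph_sum. Qed.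

Lemma aniso_le (e1 e2 : seq E) : aniso e1 ->
  (forall i, (i < size e1)%N -> isval e2 e1`_i) -> (size e1 <= size e2)%N.
Proof.
move=> an hv; rewrite leqNgt; apply/negP => lt21.
have exP : forall i : 'I_(size e1), exists v : 'rV[E]_(size e2), fval e2 (rowf v) == e1`_i.
  move=> i; have [f e] := hv i (ltn_ord i); exists (\row_(k < size e2) f k).
  by rewrite -e; apply/eqP; apply: fval_ext => k hk; rewrite rowf_row.
pose C : 'M[E]_(size e1, size e2) := \matrix_(i, j) (xchoose (exP i)) 0 j.
have hC : forall i : 'I_(size e1), e1`_i = \sum_(j < size e2) e2`_j * C i j ^+ 2.
  move=> i; rewrite -(eqP (xchooseP (exP i))) /fval big_mkord.
  by apply: eq_bigr => j _; rewrite rowfE mxE.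
have kn : kermx C != 0.
  rewrite -mxrank_eq0 mxrank_ker subn_eq0 -ltnNge.
  exact: leq_ltn_trans (rank_leq_col C) lt21.
have [i ui] : exists i, row i (kermx C) != 0.
  apply/existsP; apply: contraR kn; rewrite negb_exists => /forallP h.
  by apply/eqP/row_matrixP => i; rewrite row0; apply/eqP; move: (h i); rewrite negbK.
set u := row i (kermx C) in ui.
have uC : u *m C = 0 by rewrite /u -row_mul mulmx_ker row0.
have : fval e1 (rowf u) = 0.
  rewrite /fval big_mkord.
  under eq_bigr => k _ do rewrite hC rowfE mulr_suml.
  rewrite exchange_big /=; apply: big1 => j _.
  have h0 : \sum_k u 0 k * C k j = 0.
    by have := uC; move/matrixP/(_ 0 j); rewrite !mxE.
  transitivity (e2`_j * (\sum_k u 0 k * C k j) ^+ 2); last by rewrite h0 expr2 !mul0r mulr0.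
  rewrite frob2 mulr_sumr; apply: eq_bigr => k _; rewrite exprMn; ring.
move/an => z; move/negP: ui; apply; apply/eqP/rowP => k.
by rewrite [RHS]mxE -rowfE z.
Qed.

Lemma index_unique d r1 r2 : pfister_index d r1 -> pfister_index d r2 -> r1 = r2.
Proof.
move=> [b1 [_ [an1 is1]]] [b2 [_ [an2 is2]]].
have i1 := isometric_iso is1; have i2 := isometric_iso is2.
have s1 := iso_isometric i1; have s2 := iso_isometric i2.
case: s1 => s1 _; case: s2 => s2 _.
have A1 := anisotropic_aniso an1; have A2 := anisotropic_aniso an2.
have tr : forall (X Y : seq E) rX rY, iso d (pfister (nseq rX 1 ++ X)) ->
    iso d (pfister (nseq rY 1 ++ Y)) -> aniso (pfister X) ->
    (size (pfister X) <= size (pfister Y))%N.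
  move=> X Y rX rY iX iY aX; apply: aniso_le => // i hi.
  apply/(pf_ones_val rY); apply: isval_iso iY _.
  apply: isval_iso (iso_sym iX) _; apply/(pf_ones_val rX).
  by exists (fun j => (j == i)%:R); rewrite fval_unit.
have := tr _ _ _ _ i1 i2 A1; have := tr _ _ _ _ i2 i1 A2.
move=> l1 l2; have em : size b1 = size b2.
  by apply: (@expnI 2) => //; rewrite -!size_pfister; apply/eqP; rewrite eqn_leq l1 l2.
move: s1 s2; rewrite !size_pfister !size_cat size_nseq em => -> /expnI.
by rewrite size_nseq => /(_ isT) /addIn.
Qed.

End Uniq.

Unset Implicit Arguments. Set Strict Implicit.

Theorem lemma4p11 (F K : fieldType) (iota : {rmorphism F -> K})
    (n : nat) (a : seq F) (alpha : F) (beta : K) :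
  2%N \in [pchar F] ->
  size a = n ->
  all (fun x => x != 0) a ->
  inQ (pfister a) alpha ->
  ~ (exists x : F, x ^+ 2 = alpha) ->
  beta ^+ 2 = iota alpha ->
  (forall x : K, exists u v : F, x = iota u + iota v * beta) ->
  (forall r : nat, pfister_index (pfister a) r ->
     pfister_index (pfister (map iota a)) r.+1) /\
  (forall r s : nat, pfister_index (pfister a) r ->
     pfister_index (pfister (map iota a)) s -> s = r.+1).
Proof.
move=> ch2 _ _ hQ nsq hb hK.
have chK : 2%N \in [pchar K] := rmorph_pchar iota ch2.
have valA : isval (pfister a) alpha.
  case: hQ => [a0|[v [_ e]]].
    by case: nsq; exists 0; rewrite a0 expr0n.
  by exists (rowf v); rewrite -bval_fval.
have P1 : forall r : nat, pfister_index (pfister a) r ->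
     pfister_index (pfister (map iota a)) r.+1.
  move=> r [b [bnz [ban biso]]].
  have i1 := isometric_iso biso.
  have vb : isval (pfister b) alpha.
    by apply/(pf_ones_val ch2 r); apply: isval_iso i1 valA.
  case: vb => f fb.
  have [g [gnz gan giso _]] := stepC ch2 nsq hb hK bnz (anisotropic_aniso ban) fb.
  exists g; split => //; split; first exact: aniso_anisotropic.
  apply: iso_isometric; rewrite nseqS_cat.
  apply: iso_trans (iso_ones r giso).
  have := iso_map iota i1; rewrite !map_pfister map_cat map_nseq rmorph1 //.
split => // r s h1 h2.
exact: (index_unique chK h2 (P1 r h1)).
Qed.
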